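(* Let $A = kQ/\ker\eta$ be a ghor algebra of a dimer quiver $Q$ on a surface $\Sigma$, and let $V$ be a simple left $A$-module. Then for each vertex $i \in Q_0$, $\dim_k e_iV \leq 1$.
   Context: $k$ is an algebraically closed field. $\Sigma$ is a compact orientable surface, smooth or with two points identified. A dimer quiver is a quiver $Q$ embedded in $\Sigma$ such that each connected component of $\Sigma\setminus Q$ is simply connected and bounded by an oriented cycle (a unit cycle). A perfect matching is a set $x$ of arrows such that each unit cycle contains exactly one arrow of $x$; $\mathcal{P}$ is the set of perfect matchings and $k[\mathcal{P}]$ the polynomial ring with variables $\mathcal{P}$. With $n = |Q_0|$ and $e_{ij}$ the matrix units of $M_n(k)$, $\eta: kQ \to M_n(k[\mathcal{P}])$ is the algebra homomorphism with $\eta(e_i) = e_{ii}$ for vertices $i$ and $\eta(a) = e_{\operatorname{h}(a),\operatorname{t}(a)}\prod_{x \in \mathcal{P},\, x \ni a} x$ for arrows $a$ (h = head, t = tail). The ghor algebra is $A = kQ/\ker\eta$; $e_i$ denotes the idempotent of vertex $i$. *)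

(* Defs.v *)
From HB Require Import structures.
From mathcomp Require Import all_boot all_order all_algebra.
From mathcomp Require Import mpoly.
Set Implicit Arguments.
Unset Strict Implicit.
Unset Printing Implicit Defensive.
Import Order.TTheory GRing.Theory.
Local Open Scope ring_scope.

Record quiver2 := Quiver2 {
  Q0 : finType;
  Q1 : finType;
  qhead : Q1 -> Q0;
  qtail : Q1 -> Q0;
  faces_pos : seq (seq Q1);
  faces_neg : seq (seq Q1)
}.

Section Dimer.
Variable Q : quiver2.

Definition unit_cycles : seq (seq (Q1 Q)) := faces_pos Q ++ faces_neg Q.

Definition is_oriented_cycle (f : seq (Q1 Q)) : bool :=
  (f != [::]) && uniq f && all (fun a => qtail (next f a) == qhead a) f.

(* ends of arrows: inl a = head end of a, inr b = tail end of b *)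
Definition end_at (v : Q0 Q) (e : Q1 Q + Q1 Q) : bool :=
  match e with inl a => qhead a == v | inr b => qtail b == v end.

Definition corner (e1 e2 : Q1 Q + Q1 Q) : bool :=
  match e1, e2 with
  | inl a, inr b => has (fun f => (a \in f) && (next f a == b)) unit_cycles
  | _, _ => false
  end.

Definition link_rel (v : Q0 Q) : rel (Q1 Q + Q1 Q) :=
  fun e1 e2 => [&& end_at v e1, end_at v e2 & corner e1 e2 || corner e2 e1].

Definition link_connected (v : Q0 Q) : bool :=
  [forall e1, forall e2,
     end_at v e1 ==> end_at v e2 ==> connect (link_rel v) e1 e2].

(* Combinatorial encoding of "Q is a dimer quiver on a compact orientable
   surface, smooth or with two points identified": the faces are oriented
   cycles, every arrow lies in exactly one positive and one negative unit
   cycle, every vertex lies on an arrow, the link of every vertex has at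
   most two components, and at most one vertex (the pinch point) has a
   disconnected link. *)
Definition is_dimer_quiver : Prop :=
  [/\ all is_oriented_cycle unit_cycles,
      (forall a : Q1 Q, count (fun f => a \in f) (faces_pos Q) = 1%N) /\
      (forall a : Q1 Q, count (fun f => a \in f) (faces_neg Q) = 1%N),
      (forall v : Q0 Q, exists e, end_at v e),
      (forall (v : Q0 Q) e1 e2 e3, end_at v e1 -> end_at v e2 -> end_at v e3 ->
        [|| connect (link_rel v) e1 e2, connect (link_rel v) e2 e3
          | connect (link_rel v) e1 e3])
    & forall v w : Q0 Q, ~~ link_connected v -> ~~ link_connected w -> v = w].

Definition perfect_matching (x : {set Q1 Q}) : bool :=
  all (fun f => count (mem x) f == 1%N) unit_cycles.

Definition PM : finType := {x : {set Q1 Q} | perfect_matching x}.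

(* paths: (start vertex s, [:: a1; ...; am]) meaning a_m ... a_1, a1 first *)
Fixpoint valid_path (s : Q0 Q) (l : seq (Q1 Q)) : bool :=
  match l with
  | [::] => true
  | a :: l' => (qtail a == s) && valid_path (qhead a) l'
  end.

Definition path_end (s : Q0 Q) (l : seq (Q1 Q)) : Q0 Q := last s (map (@qhead Q) l).

Variable k : fieldType.

Definition kP := {mpoly k[#|{: PM}|]}.

Definition eta_arrow (a : Q1 Q) : kP :=
  \prod_(x : PM | a \in val x) 'X_(enum_rank x).

(* eta on a path: e_{h, t} * product of the monomials of its arrows
   (eta(e_i) = e_ii for the trivial path at i) *)
Definition eta_path (p : Q0 Q * seq (Q1 Q)) : 'M[kP]_#|{: Q0 Q}| :=
  (\prod_(a <- p.2) eta_arrow a) *: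
    delta_mx (enum_rank (path_end p.1 p.2)) (enum_rank p.1).

Definition eta_elt (c : seq (k * (Q0 Q * seq (Q1 Q)))) : 'M[kP]_#|{: Q0 Q}| :=
  \sum_(q <- c) (q.1%:MP *: eta_path q.2).

(* Left kQ-modules: a k-vector space V with linear maps rv i (action of *)
(* e_i) and ra a (action of a) satisfying the defining relations of kQ. *)
Variable V : lmodType k.
Variable rv : Q0 Q -> {linear V -> V}.
Variable ra : Q1 Q -> {linear V -> V}.

Definition is_kQ_module : Prop :=
  [/\ forall i j v, rv i (rv j v) = if i == j then rv i v else 0,
      forall v, \sum_(i : Q0 Q) rv i v = v
    & forall a v, ra a v = rv (qhead a) (ra a (rv (qtail a) v))].

Definition act_path (p : Q0 Q * seq (Q1 Q)) (v : V) : V :=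
  foldl (fun w a => ra a w) (rv p.1 v) p.2.

Definition act_elt (c : seq (k * (Q0 Q * seq (Q1 Q)))) (v : V) : V :=
  \sum_(q <- c) q.1 *: act_path q.2 v.

(* ker eta annihilates V, i.e. V is a module over A = kQ / ker eta *)
Definition ker_eta_annihilates : Prop :=
  forall c : seq (k * (Q0 Q * seq (Q1 Q))),
    all (fun q => valid_path q.2.1 q.2.2) c ->
    eta_elt c = 0 -> forall v, act_elt c v = 0.

Definition is_simple_module : Prop :=
  (exists v : V, v != 0) /\
  forall W : {pred V},
    0 \in W ->
    (forall (c : k) u w, u \in W -> w \in W -> c *: u + w \in W) ->
    (forall p v, valid_path p.1 p.2 -> v \in W -> act_path p v \in W) ->
    (forall v, v \in W -> v = 0) \/ (forall v, v \in W).

Definition dim_eV_le1 (i : Q0 Q) : Prop :=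
  exists u : V, forall v, exists c : k, rv i v = c *: u.

End Dimer.

(* Main.v *)
Require Import Defs.
From HB Require Import structures.
From mathcomp Require Import all_boot all_order all_algebra.
From mathcomp Require Import mpoly.
From Stdlib Require Import ClassicalEpsilon Lia.
From mathcomp Require Import ring zify.
Set Implicit Arguments. Unset Strict Implicit. Unset Printing Implicit Defensive.
Import GRing.Theory.
Local Open Scope ring_scope.

Definition pb (P : Prop) : bool := if excluded_middle_informative P then true else false.
Lemma pbP (P : Prop) : reflect P (pb P).
Proof. by rewrite /pb; case: excluded_middle_informative => H; constructor. Qed.

Record sfield (L : fieldType) := SField {
  sfp : {pred L};
  sf1 : 1 \in sfp;
  sfB : {in sfp &, forall x y, x - y \in sfp};
  sfM : {in sfp &, forall x y, x * y \in sfp};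
  sfV : {in sfp, forall x, x^-1 \in sfp} }.

Record sring (L : fieldType) := SRing {
  srp : {pred L};
  sr1 : 1 \in srp;
  srB : {in srp &, forall x y, x - y \in srp};
  srM : {in srp &, forall x y, x * y \in srp} }.

Section SubF.
Variables (L : fieldType) (K : sfield L).
Definition Kp : {pred L} := sfp K.
Lemma Kp_divring : GRing.divring_closed Kp.
Proof.
split; [exact: sf1 | exact: sfB | move=> x y Hx Hy; apply: sfM => //; exact: sfV].
Qed.
HB.instance Definition _ := GRing.isDivringClosed.Build L Kp Kp_divring.
Definition subF := {x : L | x \in Kp}.
HB.instance Definition _ := [isSub of subF for @sval L (fun x => x \in Kp)].
HB.instance Definition _ := [Choice of subF by <:].
HB.instance Definition _ := [SubChoice_isSubIntegralDomain of subF by <:].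
HB.instance Definition _ := [SubIntegralDomain_isSubField of subF by <:].
End SubF.

Section SubR.
Variables (L : fieldType) (R : sring L).
Definition Rp : {pred L} := srp R.
Lemma Rp_subring : GRing.subring_closed Rp.
Proof. split; [exact: sr1 | exact: srB | exact: srM]. Qed.
HB.instance Definition _ := GRing.isSubringClosed.Build L Rp Rp_subring.
Definition subR := {x : L | x \in Rp}.
HB.instance Definition _ := [isSub of subR for @sval L (fun x => x \in Rp)].
HB.instance Definition _ := [Choice of subR by <:].
HB.instance Definition _ := [SubChoice_isSubComNzRing of subR by <:].
End SubR.

Section Zar.
Variable L : fieldType.

Definition intF (K : sfield L) x := integralOver (val : subF K -> L) x.
Definition intR (R : sring L) x := integralOver (val : subR R -> L) x.

Lemma intF_K K x : x \in Kp K -> intF K x.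
Proof. move=> Hx; have -> : x = val (Sub x Hx : subF K) by []. exact: integral_id. Qed.
Lemma intR_K R x : x \in Rp R -> intR R x.
Proof. move=> Hx; have -> : x = val (Sub x Hx : subR R) by []. exact: integral_id. Qed.

Inductive gen (S : {pred L}) (ys : seq L) : L -> Prop :=
| genS x : x \in S -> gen S ys x
| genY y : y \in ys -> gen S ys y
| genD x y : gen S ys x -> gen S ys y -> gen S ys (x + y)
| genM x y : gen S ys x -> gen S ys y -> gen S ys (x * y).

Lemma gen_int (R : comNzRingType) (f : {rmorphism R -> L}) S ys x :
  (forall x, x \in S -> integralOver f x) -> (forall y, y \in ys -> integralOver f y) ->
  gen S ys x -> integralOver f x.
Proof.
move=> HS HY; elim=> {x} [x /HS|y /HY|x y _ Hx _ Hy|x y _ Hx _ Hy] //.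
  exact: integral_add. exact: integral_mul.
Qed.

Definition inf (S : {pred L}) := forall s : seq L, exists2 c, c \in S & c \notin s.


Lemma inf_nonroot S p : inf S -> p != 0 -> exists2 c, c \in S & ~~ root p c.
Proof.
move=> hS p0.
have hl : forall n, exists s : seq L, [/\ size s = n, uniq s & all (mem S) s].
  elim=> [|n [s [s1 s2 s3]]]; first by exists [::].
  have [c cS cs] := hS s; exists (c :: s); split => //=; first by rewrite s1.
  by rewrite cs s2. by rewrite cS s3.
have [s [s1 s2 s3]] := hl (size p).
case: (boolP (all (root p) s)) => [ha|].
  by have := max_poly_roots p0 ha s2; rewrite s1 ltnn.
case/allPn => c cs nr; exists c => //; exact: (allP s3).
Qed.

Section Adjoin.
Variables (K : sfield L) (y : L).
Definition Kyp : {pred L} := fun x => pb (exists p q : {poly L},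
  [/\ p \is a polyOver (Kp K), q \is a polyOver (Kp K), q.[y] != 0 & x = p.[y] / q.[y]]).

Lemma Ky1 : 1 \in Kyp.
Proof.
apply/pbP; exists 1, 1; split; rewrite ?rpred1 // ?hornerC ?oner_neq0 //.
by rewrite divr1.
Qed.
Lemma KyB : {in Kyp &, forall x z, x - z \in Kyp}.
Proof.
move=> x z /pbP [p [q [hp hq hq0 ->]]] /pbP [p' [q' [hp' hq' hq0' ->]]].
apply/pbP; exists (p * q' - p' * q), (q * q'); split.
- by rewrite rpredB // rpredM.
- by rewrite rpredM.
- by rewrite hornerM mulf_neq0.
- rewrite hornerD hornerN !hornerM; field; by apply/andP.
Qed.
Lemma KyM : {in Kyp &, forall x z, x * z \in Kyp}.
Proof.
move=> x z /pbP [p [q [hp hq hq0 ->]]] /pbP [p' [q' [hp' hq' hq0' ->]]].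
apply/pbP; exists (p * p'), (q * q'); split.
- by rewrite rpredM.
- by rewrite rpredM.
- by rewrite hornerM mulf_neq0.
- rewrite !hornerM; field; by apply/andP.
Qed.
Lemma KyV : {in Kyp, forall x, x^-1 \in Kyp}.
Proof.
move=> x /pbP [p [q [hp hq hq0 ->]]].
have [hp0|hp0] := eqVneq p.[y] 0.
  apply/pbP; exists 0, 1; split; rewrite ?rpred0 ?rpred1 ?hornerC ?oner_neq0 //.
  by rewrite hp0 mul0r invr0 mul0r.
apply/pbP; exists q, p; split => //; by rewrite invf_div.
Qed.
Definition Ky := SField Ky1 KyB KyM KyV.

Lemma Ky_K x : x \in Kp K -> x \in Kp Ky.
Proof.
move=> hx; apply/pbP; exists x%:P, 1; split; rewrite ?polyOverC ?rpred1 ?hornerC ?oner_neq0 //.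
by rewrite divr1.
Qed.
Lemma Ky_y : y \in Kp Ky.
Proof.
apply/pbP; exists 'X, 1; split; rewrite ?polyOverX ?rpred1 ?hornerC ?oner_neq0 //.
by rewrite hornerX divr1.
Qed.
End Adjoin.

Lemma gen_Ky K y ys x : gen (Kp K) (y :: ys) x -> gen (Kp (Ky K y)) ys x.
Proof.
elim=> {x} [x hx|z|x z _ h1 _ h2|x z _ h1 _ h2].
- by apply: genS; apply: Ky_K.
- rewrite inE => /orP [/eqP ->|hz]; [apply: genS; exact: Ky_y | exact: genY].
- exact: genD.
- exact: genM.
Qed.

Lemma gen_in K x : gen (Kp K) [::] x -> x \in Kp K.
Proof. by elim=> {x} // [x z _ h1 _ h2|x z _ h1 _ h2]; rewrite ?rpredD ?rpredM. Qed.


Section Rf.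
Variables (K : sfield L) (y : L) (f : {poly L}) (hf : f \is a polyOver (Kp K)).
Definition Rfp : {pred L} := fun x => pb (exists m : nat, exists p : {poly L},
  p \is a polyOver (Kp K) /\ x * f.[y] ^+ m = p.[y]).
Lemma Rf1 : 1 \in Rfp.
Proof. by apply/pbP; exists 0%N, 1; rewrite rpred1 expr0 mulr1 hornerC. Qed.
Lemma RfB : {in Rfp &, forall x z, x - z \in Rfp}.
Proof.
move=> x z /pbP [m [p [hp e1]]] /pbP [m' [p' [hp' e2]]].
apply/pbP; exists (m + m')%N, (p * f ^+ m' - p' * f ^+ m); split.
  by rewrite rpredB // rpredM // rpredX.
rewrite hornerD hornerN !hornerM !horner_exp -e1 -e2 exprD.
rewrite mulrBl; congr (_ - _); rewrite -!mulrA; congr (_ * _); by rewrite mulrC.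
Qed.
Lemma RfM : {in Rfp &, forall x z, x * z \in Rfp}.
Proof.
move=> x z /pbP [m [p [hp e1]]] /pbP [m' [p' [hp' e2]]].
apply/pbP; exists (m + m')%N, (p * p'); split; first by rewrite rpredM.
rewrite hornerM -e1 -e2 exprD; ring.
Qed.
Definition Rf := SRing Rf1 RfB RfM.

Lemma Rf_K x : x \in Kp K -> x \in Rp Rf.
Proof. by move=> hx; apply/pbP; exists 0%N, x%:P; rewrite polyOverC hx expr0 mulr1 hornerC. Qed.
Lemma Rf_y : y \in Rp Rf.
Proof. by apply/pbP; exists 0%N, 'X; rewrite polyOverX expr0 mulr1 hornerX. Qed.
End Rf.

Lemma Rf_mono K y f h g (hf : f \is a polyOver (Kp K)) (hh : h \is a polyOver (Kp K))
  (hg : g \is a polyOver (Kp K)) (e : h = f * g) x :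
  x \in Rp (Rf y hf) -> x \in Rp (Rf y hh).
Proof.
move=> /pbP [m [p [hp e1]]]; apply/pbP; exists m, (p * g ^+ m); split.
  by rewrite rpredM // rpredX.
by rewrite e !hornerM horner_exp -e1 exprMn mulrA.
Qed.

Lemma intR_mono (R1 R2 : sring L) x : {subset Rp R1 <= Rp R2} -> intR R1 x -> intR R2 x.
Proof.
move=> sub [P Pm Pr].
apply: (@integral_root_monic _ _ (val : subR R2 -> L) x (map_poly val P)) => //.
  exact: monic_map.
move=> c /(nthP 0) [l _ <-]; apply: intR_K; apply: sub.
rewrite coef_map; exact: valP.
Qed.

Lemma Rf_contra K y f (hf : f \is a polyOver (Kp K))
  (tr : forall p, p \is a polyOver (Kp K) -> p.[y] = 0 -> p = 0) c :
  c \in Kp K -> f.[c] != 0 -> y != c -> ~ intR (Rf y hf) (y - c)^-1.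
Proof.
move=> cK fc yc [P Pmon]; set Q := map_poly val P => Qr.
have Qmon : Q \is monic by exact: monic_map.
have QR l : Q`_l \in Rp (Rf y hf) by rewrite coef_map; exact: valP.
have [d sQ] : exists d, size Q = d.+1.
  exists (size Q).-1; rewrite prednK // size_poly_gt0; exact: monic_neq0.
have hm (l : 'I_d.+1) : exists mh : nat * {poly L},
    mh.2 \is a polyOver (Kp K) /\ Q`_l * f.[y] ^+ mh.1 = mh.2.[y].
  by have /pbP [m [p [hp e]]] := QR l; exists (m, p).
have [mh hmh] := fin_all_exists hm.
set N := \max_(l < d.+1) (mh l).1.
pose H l := (mh l).2 * f ^+ (N - (mh l).1).
have HK l : H l \is a polyOver (Kp K).
  by rewrite rpredM // ?rpredX //; case: (hmh l).
have Hy l : (H l).[y] = Q`_l * f.[y] ^+ N.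
  rewrite hornerM horner_exp; case: (hmh l) => _ <-.
  rewrite -mulrA -exprD subnKC //; exact: (leq_bigmax l).
have yc0 : y - c != 0 by rewrite subr_eq0.
pose G := \sum_(l < d.+1) H l * ('X - c%:P) ^+ (d - l).
have GK : G \is a polyOver (Kp K).
  apply: rpred_sum => l _; rewrite rpredM // rpredX // polyOverXsubC //.
have Gy : G.[y] = 0.
  have Qu : \sum_(l < d.+1) Q`_l * (y - c)^-1 ^+ l = 0.
    by rewrite -sQ -horner_coef; exact/rootP.
  rewrite horner_sum.
  transitivity (f.[y] ^+ N * (y - c) ^+ d * \sum_(l < d.+1) Q`_l * (y - c)^-1 ^+ l);
    last by rewrite Qu mulr0.
  rewrite mulr_sumr; apply: eq_bigr => l _.
  rewrite hornerM horner_exp hornerXsubC Hy.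
  have hl : (l <= d)%N by rewrite -ltnS.
  have -> : (y - c) ^+ d = (y - c) ^+ (d - l) * (y - c) ^+ l by rewrite -exprD subnK.
  rewrite exprVn.
  have : (y - c) ^+ l != 0 by rewrite expf_neq0.
  move: ((y - c) ^+ l) => t t0; field; exact: t0.
have G0 := tr _ GK Gy.
have Gc : G.[c] = (H ord_max).[c].
  rewrite /G big_ord_recr /= hornerD horner_sum big1 ?add0r.
    by rewrite /= subnn expr0 mulr1.
  move=> l _; rewrite hornerM horner_exp hornerXsubC subrr expr0n /=.
  by rewrite subn_eq0 leqNgt ltn_ord mulr0.
have Hd : H ord_max = f ^+ N.
  apply/eqP; rewrite -subr_eq0; apply/eqP; apply: tr.
    by rewrite rpredB // rpredX.
  rewrite hornerD hornerN horner_exp Hy.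
  have -> : Q`_(@ord_max d) = 1 by move: (monicP Qmon); rewrite lead_coefE sQ.
  by rewrite mul1r subrr.
move: Gc; rewrite G0 Hd horner0 horner_exp => /esym/eqP.
by rewrite expf_eq0 (negbTE fc) andbF.
Qed.


Lemma polyOver_int K (p : {poly L}) : p \is a polyOver (Kp K) ->
  {in p : seq L, integralRange (val : subF K -> L)}.
Proof. move=> hp a /(nthP 0) [l _ <-]; apply: intF_K; exact: (polyOverP hp). Qed.

Theorem Zp (ys : seq L) : forall K : sfield L, inf (Kp K) ->
  (forall x, gen (Kp K) ys x) -> forall x, intF K x.
Proof.
elim: ys => [|y ys IH] K infK genK.
  by move=> x; apply: intF_K; apply: gen_in; exact: genK.
set K' := Ky K y.
have infK' : inf (Kp K').
  by move=> s; have [c cK cs] := infK s; exists c => //; exact: Ky_K.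
have IHK := IH K' infK' (fun x => gen_Ky (genK x)).
case: (classic (intF K y)) => hy.
  have hK' c : c \in Kp K' -> intF K c.
    move=> /pbP [p [q [hp hq _ ->]]].
    apply: integral_div; apply: integral_horner => //; exact: polyOver_int.
  move=> x; case: (IHK x) => P Pm Pr.
  apply: (@integral_root_monic _ _ (val : subF K -> L) x (map_poly (val : subF K' -> L) P)) => //.
    exact: monic_map.
  move=> c /(nthP 0) [l _ <-]; apply: hK'; rewrite coef_map; exact: valP.
exfalso.
have tr : forall p, p \is a polyOver (Kp K) -> p.[y] = 0 -> p = 0.
  move=> p hp py; apply/eqP; apply/negPn/negP => p0; apply: hy.
  apply: (@integral_root _ _ (val : subF K -> L) p y p0); first exact/rootP.
  exact: polyOver_int.
have seqR : forall s : seq L, all (mem (Kp K')) s -> exists f (hf : f \is a polyOver (Kp K)),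
    f.[y] != 0 /\ all (mem (Rp (Rf y hf))) s.
  elim=> [|c s IHs] /=.
    by move=> _; exists 1, (rpred1 _); rewrite hornerC oner_neq0.
  case/andP => /pbP [p [q [hp hq q0 ->]]] /IHs [f1 [hf1 [f10 hs]]].
  have hqf : q * f1 \is a polyOver (Kp K) by rewrite rpredM.
  exists (q * f1), hqf; split; first by rewrite hornerM mulf_neq0.
  apply/andP; split.
    apply: (@Rf_mono K y q (q * f1) f1 hq hqf hf1 (erefl _)).
    by apply/pbP; exists 1%N, p; rewrite expr1 divfK.
  apply/allP => z /(allP hs); apply: (@Rf_mono K y f1 (q * f1) q hf1 hqf hq); exact: mulrC.
have hall : forall zs : seq L, exists f (hf : f \is a polyOver (Kp K)),
    f.[y] != 0 /\ forall z, z \in zs -> intR (Rf y hf) z.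
  elim=> [|z zs [f1 [hf1 [f10 hzs]]]].
    by exists 1, (rpred1 _); rewrite hornerC oner_neq0.
  case: (IHK z) => P Pm Pr.
  have hPK : all (mem (Kp K')) (map_poly (val : subF K' -> L) P).
    apply/allP => c /(nthP 0) [l _ <-]; rewrite coef_map; exact: valP.
  have [f2 [hf2 [f20 hP]]] := seqR _ hPK.
  have hff : f1 * f2 \is a polyOver (Kp K) by rewrite rpredM.
  exists (f1 * f2), hff; split; first by rewrite hornerM mulf_neq0.
  move=> w; rewrite inE => /orP [/eqP ->|hw].
    apply: (@intR_mono (Rf y hf2)); first by move=> a; apply: (@Rf_mono K y f2 (f1 * f2) f1 hf2 hff hf1); exact: mulrC.
    apply: (@integral_root_monic _ _ (val : subR (Rf y hf2) -> L) z (map_poly (val : subF K' -> L) P)) => //.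
      exact: monic_map.
    move=> a ha; apply: intR_K; exact: (allP hP).
  apply: (@intR_mono (Rf y hf1)); last exact: hzs.
  move=> a; exact: (@Rf_mono K y f1 (f1 * f2) f2 hf1 hff hf2).
have [f [hf [f0 hz]]] := hall ys.
have intall x : intR (Rf y hf) x.
  apply: (gen_int (S := Kp K) (ys := y :: ys) _ _ (genK x)).
    by move=> a ha; apply: intR_K; exact: Rf_K.
  move=> z; rewrite inE => /orP [/eqP ->|hw]; last exact: hz.
  apply: intR_K; exact: Rf_y.
have fn0 : f != 0 by apply: contraNneq f0 => ->; rewrite horner0.
have [c cK fc] := inf_nonroot infK fn0.
have yc : y != c by apply/eqP => yc; apply: hy; rewrite yc; exact: intF_K.
exact: (Rf_contra tr cK fc yc (intall _)).
Qed.

End Zar.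

Lemma closed_inf (k : closedFieldType) (t : seq k) : exists a, a \notin t.
Proof.
pose q := (\prod_(b <- t) ('X - b%:P)) * 'X.
have qm : q \is monic by rewrite monicMr ?monicX // monic_prod_XsubC.
have sq : (1 < size q)%N.
  rewrite /q size_mulX ?monic_neq0 ?monic_prod_XsubC // size_prod_XsubC //.
have [a ra] : exists a, root (q + 1) a.
  apply/closed_rootP; rewrite size_polyDl ?size_poly1 //; by rewrite neq_ltn sq orbT.
exists a; apply/negP => ha; move: ra; rewrite /root hornerD hornerC /q hornerM.
by rewrite horner_prod (big_rem a) //= hornerXsubC subrr !mul0r add0r oner_eq0.
Qed.

Section ZC.
Variables (k : closedFieldType) (L : fieldType) (inj : {rmorphism k -> L}).
Definition imP : {pred L} := fun x => pb (exists a, x = inj a).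
Lemma im1 : 1 \in imP. Proof. by apply/pbP; exists 1; rewrite rmorph1. Qed.
Lemma imB : {in imP &, forall x z, x - z \in imP}.
Proof. by move=> x z /pbP [a ->] /pbP [b ->]; apply/pbP; exists (a - b); rewrite rmorphB. Qed.
Lemma imM : {in imP &, forall x z, x * z \in imP}.
Proof. by move=> x z /pbP [a ->] /pbP [b ->]; apply/pbP; exists (a * b); rewrite rmorphM. Qed.
Lemma imV : {in imP, forall x, x^-1 \in imP}.
Proof. by move=> x /pbP [a ->]; apply/pbP; exists a^-1; rewrite fmorphV. Qed.
Definition K0 := SField im1 imB imM imV.

Lemma infK0 : inf (Kp K0).
Proof.
move=> s.
have hl : forall n, exists t : seq k, size t = n /\ uniq t.
  elim=> [|n [t [t1 t2]]]; first by exists [::].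
  have [a ha] := closed_inf t; exists (a :: t); by rewrite /= t1 ha t2.
have [t [t1 t2]] := hl (size s).+1.
case: (boolP (all (mem s) (map inj t))) => [ha|].
  have u : uniq (map inj t) by rewrite map_inj_uniq //; exact: fmorph_inj.
  have := uniq_leq_size u (fun z hz => allP ha z hz).
  by rewrite size_map t1 ltnn.
case/allPn => c /mapP [a _ ->] hc; exists (inj a) => //; by apply/pbP; exists a.
Qed.

Theorem zar_closed (ys : seq L) : (forall x, gen (Kp K0) ys x) -> forall x, exists a, x = inj a.
Proof.
move=> hg x; case: (Zp infK0 hg x) => P Pm Pr.
set Q := map_poly (val : subF K0 -> L) P in Pr.
have hQ (l : 'I_(size Q).+1) : exists a, Q`_l = inj a.
  rewrite /Q coef_map; exact: (elimT (pbP _) (valP (P`_l))).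
have [af haf] := fin_all_exists hQ.
pose Q0 := \poly_(l < size Q) af (inord l).
have eQ : map_poly inj Q0 = Q.
  apply/polyP => l; rewrite coef_map coef_poly; case: ltnP => hl.
    have hl' : (l < (size Q).+1)%N by apply: ltnW.
    by have := haf (inord l); rewrite inordK // => ->.
  by rewrite raddf0 nth_default.
have Qm : Q \is monic by exact: monic_map.
have Q0n : Q0 != 0.
  by apply/eqP => e; move: (monic_neq0 Qm); rewrite -eQ e map_poly0 eqxx.
have [r er] := closed_field_poly_normal Q0.
move: Pr; rewrite -eQ er map_polyZ rmorph_prod /= /root hornerZ mulf_eq0.
rewrite fmorph_eq0 lead_coef_eq0 (negbTE Q0n) /= horner_prod prodf_seq_eq0.
case/hasP => b _ /=; rewrite map_polyXsubC hornerXsubC subr_eq0 => /eqP ->.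
by exists b.
Qed.
End ZC.

Section Mod.
Variables (Q : quiver2) (k : closedFieldType) (V : lmodType k)
  (rv : Q0 Q -> {linear V -> V}) (ra : Q1 Q -> {linear V -> V}).
Hypothesis Hmod : is_kQ_module rv ra.
Hypothesis Hker : ker_eta_annihilates rv ra.

Local Notation act := (act_path rv ra).
Implicit Types (s : Q0 Q) (l : seq (Q1 Q)) (a : Q1 Q) (x y v : V).
Definition Ff (l : seq (Q1 Q)) (x : V) := foldl (fun w a => ra a w) x l.
Lemma actE s l v : act (s, l) v = Ff l (rv s v). Proof. by []. Qed.

Lemma rv_idem i v : rv i (rv i v) = rv i v.
Proof. by case: Hmod => h _ _; rewrite h eqxx. Qed.
Lemma rv_orth i j v : i != j -> rv i (rv j v) = 0.
Proof. by case: Hmod => h _ _ ij; rewrite h (negbTE ij). Qed.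
Lemma ra_h a v : rv (qhead a) (ra a v) = ra a v.
Proof. by case: Hmod => _ _ h; rewrite [in LHS]h rv_idem -h. Qed.
Lemma ra_t a v : ra a (rv (qtail a) v) = ra a v.
Proof. by case: Hmod => _ _ h; rewrite [LHS]h [RHS]h rv_idem. Qed.

Lemma Ff0 l : Ff l 0 = 0.
Proof. by elim: l => //= a l IH; rewrite /Ff /= linear0; exact: IH. Qed.
Lemma Ff_lin l (c : k) x y : Ff l (c *: x + y) = c *: Ff l x + Ff l y.
Proof. by elim: l c x y => //= b l IH c x y; rewrite /Ff /= linearP; exact: IH. Qed.
Lemma Ff_cat l1 l2 x : Ff (l1 ++ l2) x = Ff l2 (Ff l1 x).
Proof. by rewrite /Ff foldl_cat. Qed.
Lemma Ff_cons a l x : Ff (a :: l) x = Ff l (ra a x). Proof. by []. Qed.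

Lemma path_end_cat s l1 l2 : path_end s (l1 ++ l2) = path_end (path_end s l1) l2.
Proof. by rewrite /path_end map_cat last_cat. Qed.
Lemma path_end_cons s a l : path_end s (a :: l) = path_end (qhead a) l. Proof. by []. Qed.
Lemma valid_cat s l1 l2 :
  valid_path s (l1 ++ l2) = valid_path s l1 && valid_path (path_end s l1) l2.
Proof. by elim: l1 s => //= a l1 IH s; rewrite IH andbA. Qed.

Lemma Ff_end s l x : rv s x = x -> rv (path_end s l) (Ff l x) = Ff l x.
Proof. elim: l s x => [|a l IH] s x hx //; by rewrite Ff_cons path_end_cons IH // ra_h. Qed.

Lemma Ff_invalid s l x : rv s x = x -> ~~ valid_path s l -> Ff l x = 0.
Proof.
elim: l s x => [|a l IH] s x hx //.
rewrite Ff_cons /=; case: eqP => [ht|ht] /=.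
  by move=> hv; rewrite (IH (qhead a)) // ra_h.
move=> _; rewrite -ra_t -hx rv_orth ?linear0 ?Ff0 //; exact/eqP.
Qed.

Lemma act_end s l v : rv (path_end s l) (act (s, l) v) = act (s, l) v.
Proof. by rewrite actE Ff_end // rv_idem. Qed.
Lemma act_invalid s l v : ~~ valid_path s l -> act (s, l) v = 0.
Proof. by move=> h; rewrite actE (Ff_invalid (s := s)) // rv_idem. Qed.
Lemma act_lin p (c : k) x y : act p (c *: x + y) = c *: act p x + act p y.
Proof. by case: p => s l; rewrite !actE linearP Ff_lin. Qed.
Lemma act0 p : act p 0 = 0.
Proof. by case: p => s l; rewrite actE linear0 Ff0. Qed.

Lemma act_comp p q x : act q (act p x) =
  if path_end p.1 p.2 == q.1 then act (p.1, p.2 ++ q.2) x else 0.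
Proof.
case: p q => s l [s' l'] /=; case: eqP => [<-|ne].
  by rewrite [LHS]actE act_end [RHS]actE Ff_cat.
rewrite actE -act_end rv_orth ?Ff0 //; apply/eqP => e; exact: ne.
Qed.

Lemma act_perm s l1 l2 v : valid_path s l1 -> valid_path s l2 -> perm_eq l1 l2 ->
  path_end s l1 = path_end s l2 -> act (s, l1) v = act (s, l2) v.
Proof.
move=> h1 h2 hp he.
pose c : seq (k * (Q0 Q * seq (Q1 Q))) := [:: (1, (s, l1)); (-1, (s, l2))].
have := Hker (c := c); rewrite /= h1 h2 => /(_ isT).
have -> : eta_elt c = 0.
  rewrite /eta_elt !big_cons big_nil /= addr0 /eta_path /= he.
  rewrite (perm_big _ hp) /= -scalerDl -mpolyCD addrN mpolyC0 scale0r //.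
move=> /(_ erefl v); rewrite /act_elt !big_cons big_nil /= addr0 scale1r scaleN1r.
by move/eqP; rewrite subr_eq0 => /eqP.
Qed.


Lemma actD p x y : act p (x + y) = act p x + act p y.
Proof. have := act_lin p 1 x y; by rewrite !scale1r. Qed.
Lemma actZ p (c : k) x : act p (c *: x) = c *: act p x.
Proof. have := act_lin p c x 0; by rewrite act0 !addr0. Qed.
Lemma act_sum p (I : Type) (r : seq I) (G : I -> V) :
  act p (\sum_(j <- r) G j) = \sum_(j <- r) act p (G j).
Proof.
elim: r => [|j r IH]; first by rewrite !big_nil act0.
by rewrite !big_cons actD IH.
Qed.

Hypothesis Hsim : is_simple_module rv ra.

Lemma gen_all v0 : v0 != 0 -> forall x, exists c, x = act_elt rv ra c v0.
Proof.
move=> v00.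
pose W : {pred V} := fun x => pb (exists c, x = act_elt rv ra c v0).
have W0 : 0 \in W by apply/pbP; exists [::]; rewrite /act_elt big_nil.
have WL : forall (c : k) u w, u \in W -> w \in W -> c *: u + w \in W.
  move=> c u w /pbP [c1 ->] /pbP [c2 ->]; apply/pbP.
  exists ([seq (c * q.1, q.2) | q <- c1] ++ c2).
  rewrite /act_elt big_cat big_map scaler_sumr /=; congr (_ + _).
  by apply: eq_bigr => q _; rewrite scalerA.
have WA : forall p v, valid_path p.1 p.2 -> v \in W -> act p v \in W.
  move=> [s l] v _ /pbP [c ->]; apply/pbP.
  exists [seq (if path_end q.2.1 q.2.2 == s then q.1 else 0, (q.2.1, q.2.2 ++ l)) | q <- c].
  rewrite /act_elt act_sum big_map; apply: eq_bigr => [[a [s' l']]] _ /=.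
  rewrite actZ act_comp /=; case: eqP => _; first by [].
  by rewrite scaler0 scale0r.
have Wv0 : v0 \in W.
  apply/pbP; exists [seq (1, (s, [::])) | s <- enum (Q0 Q)].
  rewrite /act_elt big_map.
  case: Hmod => _ hs _; rewrite -[LHS]hs.
  rewrite big_enum /=; apply: eq_bigr => s _; by rewrite scale1r.
case: Hsim => _ /(_ W W0 WL WA) [h|h].
  by move: v00; rewrite (h _ Wv0) eqxx.
by move=> x; apply/pbP; exact: h.
Qed.


Section Cyc.
Variable i : Q0 Q.
Definition cyc l := valid_path i l && (path_end i l == i).
Definition T l x := act (i, l) x.
Definition allc (cc : seq (k * seq (Q1 Q))) := all (fun q => cyc q.2) cc.
Definition Tc (cc : seq (k * seq (Q1 Q))) x := \sum_(q <- cc) q.1 *: T q.2 x.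

Lemma cyc_cat l1 l2 : cyc l1 -> cyc l2 -> cyc (l1 ++ l2).
Proof.
move=> /andP [v1 /eqP e1] /andP [v2 /eqP e2].
by rewrite /cyc valid_cat path_end_cat e1 v1 v2 e2 eqxx.
Qed.
Lemma T_comp l1 l2 x : cyc l1 -> T l2 (T l1 x) = T (l1 ++ l2) x.
Proof. by move=> /andP [_ /eqP e]; rewrite /T act_comp /= e eqxx. Qed.
Lemma T_perm l1 l2 x : cyc l1 -> cyc l2 -> perm_eq l1 l2 -> T l1 x = T l2 x.
Proof.
move=> /andP [v1 /eqP e1] /andP [v2 /eqP e2] hp.
by apply: act_perm => //; rewrite e1 e2.
Qed.
Lemma T_comm l1 l2 x : cyc l1 -> cyc l2 -> T l1 (T l2 x) = T l2 (T l1 x).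
Proof.
move=> c1 c2; rewrite !T_comp //.
apply: T_perm; [exact: cyc_cat | exact: cyc_cat | by rewrite perm_catC].
Qed.
Lemma T_rv l x : T l (rv i x) = T l x.
Proof. by rewrite /T !actE rv_idem. Qed.
Lemma T_end l x : cyc l -> rv i (T l x) = T l x.
Proof. by move=> /andP [_ /eqP e]; rewrite /T -{1}e act_end. Qed.
Lemma T_lin l (c : k) x y : T l (c *: x + y) = c *: T l x + T l y.
Proof. exact: act_lin. Qed.
Lemma TZ l (c : k) x : T l (c *: x) = c *: T l x.
Proof. exact: actZ. Qed.
Lemma TD l x y : T l (x + y) = T l x + T l y.
Proof. exact: actD. Qed.
Lemma T0 l : T l 0 = 0.
Proof. exact: act0. Qed.
Lemma T_sum l (I : Type) (r : seq I) (G : I -> V) :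
  T l (\sum_(j <- r) G j) = \sum_(j <- r) T l (G j).
Proof. exact: act_sum. Qed.

Lemma Tc_lin cc (c : k) x y : Tc cc (c *: x + y) = c *: Tc cc x + Tc cc y.
Proof.
rewrite /Tc scaler_sumr -big_split /=; apply: eq_bigr => q _.
by rewrite T_lin scalerDr !scalerA mulrC.
Qed.
Lemma Tc0 cc : Tc cc 0 = 0.
Proof. by rewrite /Tc big1 // => q _; rewrite /T act0 scaler0. Qed.
Lemma TcD cc x y : Tc cc (x + y) = Tc cc x + Tc cc y.
Proof. by have := Tc_lin cc 1 x y; rewrite !scale1r. Qed.
Lemma TcZ cc (c : k) x : Tc cc (c *: x) = c *: Tc cc x.
Proof. by have := Tc_lin cc c x 0; rewrite Tc0 !addr0. Qed.
Lemma Tc_sum cc (I : Type) (r : seq I) (G : I -> V) :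
  Tc cc (\sum_(j <- r) G j) = \sum_(j <- r) Tc cc (G j).
Proof.
elim: r => [|j r IH]; first by rewrite !big_nil Tc0.
by rewrite !big_cons TcD IH.
Qed.
Lemma Tc_rv cc x : Tc cc (rv i x) = Tc cc x.
Proof. by apply: eq_bigr => q _; rewrite T_rv. Qed.
Lemma Tc_end cc x : allc cc -> rv i (Tc cc x) = Tc cc x.
Proof.
move=> /allP h; rewrite /Tc linear_sum; apply: eq_big_seq => q hq.
rewrite linearZZ.
by rewrite T_end //; exact: (h q hq).
Qed.
Lemma T_Tc l cc x : allc cc -> cyc l -> T l (Tc cc x) = Tc cc (T l x).
Proof.
move=> /allP h cl; rewrite /Tc T_sum; apply: eq_big_seq => q hq.
by rewrite TZ T_comm //; exact: (h q hq).
Qed.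
Lemma Tc_comm cc1 cc2 x : allc cc1 -> allc cc2 -> Tc cc1 (Tc cc2 x) = Tc cc2 (Tc cc1 x).
Proof.
move=> h1 h2.
transitivity (\sum_(q <- cc1) Tc cc2 (q.1 *: T q.2 x)); last by rewrite -Tc_sum.
rewrite [Tc cc1 _]/Tc; apply: eq_big_seq => q hq.
by rewrite TcZ T_Tc //; exact: (allP h1 q hq).
Qed.


Definition ccneg (cc : seq (k * seq (Q1 Q))) := [seq (- q.1, q.2) | q <- cc].
Lemma Tc_cat cc1 cc2 x : Tc (cc1 ++ cc2) x = Tc cc1 x + Tc cc2 x.
Proof. by rewrite /Tc big_cat. Qed.
Lemma Tc_neg cc x : Tc (ccneg cc) x = - Tc cc x.
Proof.
rewrite /Tc big_map -sumrN; apply: eq_bigr => q _ /=; by rewrite scaleNr.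
Qed.
Lemma allc_cat cc1 cc2 : allc cc1 -> allc cc2 -> allc (cc1 ++ cc2).
Proof. by rewrite /allc all_cat => -> ->. Qed.
Lemma allc_neg cc : allc cc -> allc (ccneg cc).
Proof. by rewrite /allc all_map. Qed.

Definition ccprod (cc1 cc2 : seq (k * seq (Q1 Q))) :=
  allpairs (fun q1 q2 => (q1.1 * q2.1, q2.2 ++ q1.2)) cc1 cc2.
Lemma allc_prod cc1 cc2 : allc cc1 -> allc cc2 -> allc (ccprod cc1 cc2).
Proof.
move=> /allP h1 /allP h2; apply/allP => q /allpairsP [[q1 q2] [hq1 hq2 ->]] /=.
apply: cyc_cat; [exact: h2 | exact: h1].
Qed.
Lemma Tc_prod cc1 cc2 x : allc cc2 -> Tc cc1 (Tc cc2 x) = Tc (ccprod cc1 cc2) x.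
Proof.
move=> /allP h2; rewrite /ccprod /Tc big_allpairs_dep; apply: eq_bigr => q1 _.
rewrite T_sum scaler_sumr; apply: eq_big_seq => q2 hq2 /=.
by rewrite TZ scalerA T_comp //; exact: (h2 q2 hq2).
Qed.

Lemma rv_act_term s l v0 : rv i v0 = v0 ->
  rv i (act (s, l) v0) = if (s == i) && cyc l then T l v0 else 0.
Proof.
move=> hv; case: eqP => [->|ne] /=.
  rewrite /cyc; case: (boolP (valid_path i l)) => hval /=; last first.
    by rewrite act_invalid // linear0.
  case: eqP => [e|e]; first by rewrite -{1}e act_end.
  rewrite -act_end rv_orth //; by apply/eqP => e'; apply: e.
by rewrite actE -hv rv_orth ?Ff0 ?linear0 //; apply/eqP => e; apply: ne.
Qed.

Lemma gen_cyc v0 u : rv i v0 = v0 -> v0 != 0 -> rv i u = u ->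
  exists cc, allc cc /\ u = Tc cc v0.
Proof.
move=> hv v00 hu; have [c ec] := gen_all v00 u.
rewrite -hu ec /act_elt linear_sum; clear ec hu.
elim: c => [|[a [s l]] c [cc [hcc IH]]].
  by exists [::]; split => //; rewrite /Tc !big_nil.
rewrite big_cons linearZZ /= rv_act_term //.
case: ifP => hq.
  exists ((a, l) :: cc); split.
    by apply/andP; split => //; case/andP: hq.
  by rewrite /Tc big_cons /= IH.
by exists cc; split => //; rewrite scaler0 add0r IH.
Qed.

Lemma schur cc x0 : allc cc -> rv i x0 = x0 -> x0 != 0 -> Tc cc x0 = 0 ->
  forall u, rv i u = u -> Tc cc u = 0.
Proof.
move=> hcc hx0 x00 hT.
pose W : {pred V} := fun x => pb (forall p, Tc cc (act p x) = 0).
have W0 : 0 \in W by apply/pbP => p; rewrite act0 Tc0.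
have WL : forall (c : k) u w, u \in W -> w \in W -> c *: u + w \in W.
  move=> c u w /pbP h1 /pbP h2; apply/pbP => p.
  by rewrite act_lin Tc_lin h1 h2 scaler0 addr0.
have WA : forall p v, valid_path p.1 p.2 -> v \in W -> act p v \in W.
  move=> p v _ /pbP h; apply/pbP => q; rewrite act_comp.
  by case: ifP => _; rewrite ?h ?Tc0.
have Wx0 : x0 \in W.
  apply/pbP => [[s l]]; rewrite -Tc_rv rv_act_term //.
  case: ifP => h; last exact: Tc0.
  case/andP: h => _ hl; by rewrite -T_Tc // hT T0.
case: Hsim => _ /(_ W W0 WL WA) [h|h].
  by move: x00; rewrite (h _ Wx0) eqxx.
move=> u hu; have /pbP := h u => /(_ (i, [::])).
by rewrite actE /= hu.
Qed.

Lemma Tc_uniq cc1 cc2 w : allc cc1 -> allc cc2 -> rv i w = w -> w != 0 ->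
  Tc cc1 w = Tc cc2 w -> forall u, rv i u = u -> Tc cc1 u = Tc cc2 u.
Proof.
move=> h1 h2 hw w0 e u hu.
have := @schur (cc1 ++ ccneg cc2) w (allc_cat h1 (allc_neg h2)) hw w0.
rewrite Tc_cat Tc_neg e subrr => /(_ erefl u hu).
by rewrite Tc_cat Tc_neg => /eqP; rewrite subr_eq0 => /eqP.
Qed.


Lemma cyc_nil : cyc [::]. Proof. by rewrite /cyc /= eqxx. Qed.
Lemma Tc_id x : Tc [:: (1, [::])] x = rv i x.
Proof. by rewrite /Tc big_cons big_nil addr0 scale1r /T actE. Qed.
Lemma Tc_scal (c : k) x : Tc [:: (c, [::])] x = c *: rv i x.
Proof. by rewrite /Tc big_cons big_nil addr0 /T actE. Qed.
Lemma Tc_single l x : Tc [:: (1, l)] x = T l x.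
Proof. by rewrite /Tc big_cons big_nil addr0 scale1r. Qed.

Section Fld.
Variable w : V.
Hypothesis hw : rv i w = w.
Hypothesis w0 : w != 0.

Definition eVp : {pred V} := fun x => rv i x == x.
Lemma eVp_zmod : zmod_closed eVp.
Proof.
split; first by apply/eqP; rewrite linear0.
by move=> x y /eqP hx /eqP hy; apply/eqP; rewrite linearB hx hy.
Qed.
HB.instance Definition _ := GRing.isZmodClosed.Build V eVp eVp_zmod.
Definition eV := {x : V | x \in eVp}.
HB.instance Definition _ := [isSub of eV for @sval V (fun x => x \in eVp)].
HB.instance Definition _ := [Choice of eV by <:].
HB.instance Definition _ := [SubChoice_isSubZmodule of eV by <:].

Lemma eV_rv (u : eV) : rv i (val u) = val u.
Proof. exact/eqP/(valP u). Qed.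

Lemma opc_ex (u : eV) : exists cc, allc cc /\ val u = Tc cc w.
Proof. exact: (gen_cyc hw w0 (eV_rv u)). Qed.
Definition opc (u : eV) : seq (k * seq (Q1 Q)) :=
  proj1_sig (constructive_indefinite_description _ (opc_ex u)).
Lemma opc_spec u : allc (opc u) /\ val u = Tc (opc u) w.
Proof. exact: (proj2_sig (constructive_indefinite_description _ (opc_ex u))). Qed.
Lemma opc_all u : allc (opc u). Proof. by case: (opc_spec u). Qed.
Lemma opc_w u : Tc (opc u) w = val u. Proof. by case: (opc_spec u). Qed.
Lemma opc_eq u cc : allc cc -> Tc cc w = val u -> forall x, rv i x = x -> Tc (opc u) x = Tc cc x.
Proof. move=> hc e x hx; apply: (Tc_uniq (opc_all u) hc hw w0) => //; by rewrite opc_w e. Qed.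

Lemma mulV_in (u u' : eV) : Tc (opc u) (val u') \in eVp.
Proof. apply/eqP; apply: Tc_end; exact: opc_all. Qed.
Definition mulV (u u' : eV) : eV := exist (fun x => x \in eVp) _ (mulV_in u u').
Lemma oneV_in : w \in eVp. Proof. exact/eqP. Qed.
Definition oneV : eV := exist (fun x => x \in eVp) w oneV_in.
Lemma mulVE u u' : val (mulV u u') = Tc (opc u) (val u'). Proof. by []. Qed.

Lemma mulV_comm u u' : Tc (opc u) (val u') = Tc (opc u') (val u).
Proof. by rewrite -[val u']opc_w -[val u]opc_w Tc_comm // opc_all. Qed.

Lemma mulVA : associative mulV.
Proof.
move=> u v z; apply: val_inj; rewrite !mulVE.
have := @opc_eq (mulV u v) (ccprod (opc u) (opc v)) (allc_prod (opc_all _) (opc_all _)).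
rewrite -Tc_prod ?opc_all // opc_w mulVE => /(_ erefl (val z) (eV_rv z)) ->.
by rewrite -Tc_prod // opc_all.
Qed.
Lemma mulVC : commutative mulV.
Proof. by move=> u v; apply: val_inj; rewrite !mulVE mulV_comm. Qed.
Lemma mul1V : left_id oneV mulV.
Proof.
move=> u; apply: val_inj; rewrite mulVE (@opc_eq oneV [:: (1, [::])]).
- by rewrite Tc_id eV_rv.
- by rewrite /allc /= cyc_nil.
- by rewrite Tc_id hw.
- exact: eV_rv.
Qed.
Lemma mulVDl : left_distributive mulV +%R.
Proof.
move=> u v z; apply: val_inj; rewrite mulVE Algebra.valD !mulVE mulV_comm Algebra.valD.
by rewrite TcD !(mulV_comm z).
Qed.
Lemma oneV_neq0 : oneV != 0.
Proof. by apply/eqP => /(congr1 val) /= e; move: w0; rewrite e eqxx. Qed.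

HB.instance Definition _ := GRing.Zmodule_isComNzRing.Build eV mulVA mulVC mul1V mulVDl oneV_neq0.


Lemma mulVE' (u u' : eV) : val (u * u') = Tc (opc u) (val u'). Proof. by []. Qed.
Lemma oneVE : val (1 : eV) = w. Proof. by []. Qed.

Lemma inv_ex (u : eV) : u != 0 -> exists v : eV, v * u = 1.
Proof.
move=> u0.
have vu0 : val u != 0.
  apply/eqP => e; move/eqP: u0; apply; apply: val_inj; by rewrite e Algebra.val0.
have [cc [hcc e]] := gen_cyc (eV_rv u) vu0 hw.
have hv : Tc cc w \in eVp by apply/eqP; exact: Tc_end.
exists (exist (fun x => x \in eVp) _ hv); apply: val_inj; rewrite mulVE' oneVE.
by rewrite (@opc_eq _ cc hcc) // eV_rv.
Qed.
Definition invV (u : eV) : eV :=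
  match excluded_middle_informative (exists v : eV, v * u = 1) with
  | left H => proj1_sig (constructive_indefinite_description _ H)
  | right _ => 0 end.
Lemma invV_spec u : u != 0 -> invV u * u = 1.
Proof.
move=> u0; rewrite /invV; case: excluded_middle_informative => H.
  exact: (proj2_sig (constructive_indefinite_description _ H)).
by exfalso; apply: H; exact: inv_ex.
Qed.
Lemma invV0 : invV 0 = 0.
Proof.
rewrite /invV; case: excluded_middle_informative => // H.
exfalso; case: H => v; rewrite mulr0 => /eqP; by rewrite eq_sym oner_eq0.
Qed.
HB.instance Definition _ := GRing.ComNzRing_isField.Build eV invV_spec invV0.

Lemma injV_in (c : k) : c *: w \in eVp. Proof. by apply/eqP; rewrite linearZZ hw. Qed.
Definition injV (c : k) : eV := exist (fun x => x \in eVp) _ (injV_in c).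
Lemma injVE c : val (injV c) = c *: w. Proof. by []. Qed.
Lemma injV_mul c (u : eV) : val (injV c * u) = c *: val u.
Proof.
rewrite mulVE' (@opc_eq (injV c) [:: (c, [::])]); first by rewrite Tc_scal eV_rv.
- by rewrite /allc /= cyc_nil.
- by rewrite Tc_scal hw.
- exact: eV_rv.
Qed.
Lemma injV_zmod : zmod_morphism injV.
Proof. by move=> a b; apply: val_inj; rewrite Algebra.valB !injVE scalerBl. Qed.
Lemma injV_monoid : monoid_morphism injV.
Proof.
split; first by apply: val_inj; rewrite injVE scale1r.
move=> a b; apply: val_inj; rewrite injV_mul !injVE scalerA mulrC //.
Qed.
HB.instance Definition _ := GRing.isZmodMorphism.Build k eV injV injV_zmod.
HB.instance Definition _ := GRing.isMonoidMorphism.Build k eV injV injV_monoid.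


Lemma tV_in l : rv i (T l w) \in eVp. Proof. by apply/eqP; rewrite rv_idem. Qed.
Definition tV l : eV := exist (fun x => x \in eVp) _ (tV_in l).
Lemma tVE l : cyc l -> val (tV l) = T l w. Proof. by move=> h; rewrite /= T_end. Qed.
Lemma tV_perm l1 l2 : cyc l1 -> cyc l2 -> perm_eq l1 l2 -> tV l1 = tV l2.
Proof. by move=> h1 h2 hp; apply: val_inj; rewrite !tVE // (T_perm _ h1 h2 hp). Qed.
Lemma tV_mul l1 l2 : cyc l1 -> cyc l2 -> tV l1 * tV l2 = tV (l1 ++ l2).
Proof.
move=> h1 h2; apply: val_inj; rewrite mulVE' (@opc_eq (tV l1) [:: (1, l1)]).
- rewrite Tc_single tVE // T_comp // tVE ?cyc_cat //.
  by apply: T_perm; [exact: cyc_cat | exact: cyc_cat | rewrite perm_catC].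
- by rewrite /allc /= h1.
- by rewrite Tc_single tVE.
- exact: eV_rv.
Qed.

Lemma cyc_split (a b g : seq (Q1 Q)) : cyc (a ++ b ++ g) -> path_end i (a ++ b) = path_end i a ->
  cyc (a ++ g) /\ cyc (a ++ b ++ b ++ g).
Proof.
rewrite /cyc !valid_cat !path_end_cat => /andP [/and3P [va vb vg] /eqP e] eb.
rewrite eb in vg e.
by rewrite !eb va vb vg e eqxx.
Qed.

Definition ctxP b (ag : seq (Q1 Q) * seq (Q1 Q)) : Prop :=
  [/\ cyc (ag.1 ++ b ++ ag.2), cyc (ag.1 ++ ag.2) & tV (ag.1 ++ ag.2) != 0].
Definition rho b : eV :=
  match excluded_middle_informative (exists ag, ctxP b ag) with
  | left H => let ag := proj1_sig (constructive_indefinite_description _ H) in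
      tV (ag.1 ++ b ++ ag.2) / tV (ag.1 ++ ag.2)
  | right _ => 0 end.

Lemma perm1 (a0 g0 a b g : seq (Q1 Q)) :
  perm_eq ((a0 ++ b ++ g0) ++ (a ++ g)) ((a0 ++ g0) ++ (a ++ b ++ g)).
Proof. apply/permP => x; rewrite !count_cat; lia. Qed.
Lemma perm2 (a b g : seq (Q1 Q)) :
  perm_eq ((a ++ b ++ g) ++ (a ++ b ++ g)) ((a ++ g) ++ (a ++ b ++ b ++ g)).
Proof. apply/permP => x; rewrite !count_cat; lia. Qed.

Lemma rho_spec (a b g : seq (Q1 Q)) : ctxP b (a, g) -> tV (a ++ b ++ g) = rho b * tV (a ++ g).
Proof.
move=> hc; rewrite /rho; case: excluded_middle_informative => [H|H]; last first.
  by exfalso; apply: H; exists (a, g).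
move: (proj2_sig (constructive_indefinite_description _ H)).
move: (proj1_sig (constructive_indefinite_description _ H)) => [a0 g0] [c1 c2 n2] /=.
case: hc => /= c3 c4 _.
have key : tV (a0 ++ b ++ g0) * tV (a ++ g) = tV (a0 ++ g0) * tV (a ++ b ++ g).
  rewrite !tV_mul //; apply: tV_perm; [exact: cyc_cat | exact: cyc_cat | exact: perm1].
by rewrite mulrAC key mulrC mulrA mulVf // mul1r.
Qed.

Lemma decomp_aux (c : seq (Q1 Q)) (j1 j2 : nat) : (j1 < j2)%N -> (j2 <= #|Q0 Q|)%N ->
  (#|Q0 Q| < size c)%N -> path_end i (take j1 c) = path_end i (take j2 c) ->
  exists al bl gl, [/\ c = al ++ bl ++ gl, (0 < size bl)%N, (size bl <= #|Q0 Q|)%N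
    & path_end i (al ++ bl) = path_end i al].
Proof.
move=> h12 h2 hc e.
exists (take j1 c), (take (j2 - j1) (drop j1 c)), (drop j2 c); split.
- rewrite -{1}(cat_take_drop j1 c); congr (_ ++ _).
  rewrite -{1}(cat_take_drop (j2 - j1) (drop j1 c)) drop_drop subnK //; exact: ltnW.
- by rewrite size_takel ?subn_gt0 // size_drop; lia.
- by rewrite size_takel ?size_drop; lia.
- by rewrite -takeD subnKC ?e //; exact: ltnW.
Qed.

Lemma decomp (c : seq (Q1 Q)) : (#|Q0 Q| < size c)%N ->
  exists al bl gl, [/\ c = al ++ bl ++ gl, (0 < size bl)%N, (size bl <= #|Q0 Q|)%N
    & path_end i (al ++ bl) = path_end i al].
Proof.
move=> hc.
pose f (j : 'I_(#|Q0 Q|).+1) := path_end i (take j c).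
have : ~~ injectiveb f.
  apply/negP => /injectiveP inj; have := leq_card _ inj.
  by rewrite card_ord ltnn.
case/injectivePn => j1 [j2 ne e].
have hj1 := ltn_ord j1; have hj2 := ltn_ord j2.
case: (ltngtP j1 j2) => h.
- by apply: (decomp_aux (j1 := j1) (j2 := j2)).
- by apply: (decomp_aux (j1 := j2) (j2 := j1)).
- by move: ne; rewrite (val_inj h) eqxx.
Qed.

Fixpoint wseq (m : nat) : seq (seq (Q1 Q)) :=
  if m is m'.+1 then [::] :: allpairs (fun a l => a :: l) (enum (Q1 Q)) (wseq m')
  else [:: [::]].
Lemma wseq_mem m l : (size l <= m)%N -> l \in wseq m.
Proof.
elim: m l => [|m IH] [|a l] //= hl.
by rewrite inE /=; apply/allpairsP; exists (a, l); rewrite mem_enum IH.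
Qed.

Definition ys := [seq tV l | l <- wseq #|Q0 Q|] ++ [seq rho b | b <- wseq #|Q0 Q|].
Local Notation KK := (Kp (K0 injV)).

Lemma zero_in : (0 : eV) \in KK. Proof. by apply/pbP; exists 0; rewrite rmorph0. Qed.

Lemma t_gen c : cyc c -> gen KK ys (tV c).
Proof.
move: {2}(size c) (leqnn (size c)) => m; elim: m c => [|m IH] c hs hc.
  apply: genY; rewrite mem_cat map_f // wseq_mem //; by move: hs; case: (size c).
case: (eqVneq (tV c) 0) => [->|t0]; first by apply: genS; exact: zero_in.
case: (leqP (size c) #|Q0 Q|) => hcn.
  by apply: genY; rewrite mem_cat map_f // wseq_mem.
have [a [b [g [ec b0 bn eb]]]] := decomp hcn.
rewrite ec in hc hs t0 *.
have [c1 c2] := cyc_split hc eb.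
have ag0 : tV (a ++ g) != 0.
  apply/eqP => e; move/eqP: t0; apply.
  have : tV (a ++ b ++ g) * tV (a ++ b ++ g) = tV (a ++ g) * tV (a ++ b ++ b ++ g).
    rewrite !tV_mul //; apply: tV_perm; [exact: cyc_cat | exact: cyc_cat | exact: perm2].
  by rewrite e mul0r => /eqP; rewrite mulf_eq0 orbb => /eqP.
rewrite (rho_spec (a := a) (b := b) (g := g)); last by split.
apply: genM; first by apply: genY; rewrite mem_cat; apply/orP; right; rewrite map_f // wseq_mem.
apply: IH => //; move: hs; rewrite !size_cat; lia.
Qed.

Lemma sV_in cc : rv i (Tc cc w) \in eVp. Proof. by apply/eqP; rewrite rv_idem. Qed.
Definition sV cc : eV := exist (fun x => x \in eVp) _ (sV_in cc).

Lemma sV_gen cc : allc cc -> gen KK ys (sV cc).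
Proof.
elim: cc => [|[a l] cc IH] /=.
  move=> _; have -> : sV [::] = 0 by apply: val_inj; rewrite /= /Tc big_nil linear0.
  by apply: genS; exact: zero_in.
case/andP => hl hcc.
have -> : sV ((a, l) :: cc) = injV a * tV l + sV cc.
  apply: val_inj; rewrite Algebra.valD injV_mul tVE //= Tc_end //.
    by rewrite /Tc big_cons /= Tc_end.
  by apply/andP.
apply: genD; last exact: IH.
apply: genM; last exact: t_gen.
by apply: genS; apply/pbP; exists a.
Qed.

Lemma all_gen (x : eV) : gen KK ys x.
Proof.
have -> : x = sV (opc x) by apply: val_inj; rewrite /= Tc_end ?opc_w // opc_all.
apply: sV_gen; exact: opc_all.
Qed.

Lemma main_fld v : exists c : k, rv i v = c *: w.
Proof.
have hin : rv i v \in eVp by apply/eqP; rewrite rv_idem.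
have [a ea] := zar_closed all_gen (exist (fun x => x \in eVp) _ hin).
by exists a; move: (congr1 val ea); rewrite injVE.
Qed.

End Fld.
End Cyc.

End Mod.

Unset Implicit Arguments.

Theorem lemma3p3 (Q : quiver2) (k : closedFieldType) (V : lmodType k)
  (rv : Q0 Q -> {linear V -> V}) (ra : Q1 Q -> {linear V -> V}) :
  is_dimer_quiver Q ->
  is_kQ_module rv ra ->
  ker_eta_annihilates rv ra ->
  is_simple_module rv ra ->
  forall i : Q0 Q, dim_eV_le1 rv i.
Proof.
move=> _ Hmod Hker Hsim i.
case: (excluded_middle_informative (exists w, rv i w = w /\ w != 0)) => [[w [hw w0]]|H].
  by exists w => v; exact: (main_fld Hmod Hker Hsim hw w0 v).
exists 0 => v; exists 0; rewrite scale0r.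
apply/eqP; apply/negPn/negP => hv; apply: H; exists (rv i v); split => //.
exact: (rv_idem Hmod).
Qed.
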